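(* For $0\le r<n$, the Laplacian $\Lambda_r$ on $M_r$ is positive definite. (Consequently $H_r(M)=0$ for $0\le r<n$.)
   Context: $M_r$ ($0\le r\le n$) is the complex vector space with orthonormal basis the injective words of length $r$ on $\{1,\dots,n\}$, with boundary $\partial_r(a_1\cdots a_r)=\sum_{j=1}^r(-1)^{j-1}a_1\cdots\widehat{a_j}\cdots a_r$. $\delta_r$ is the adjoint of $\partial_{r+1}$ with respect to these orthonormal bases, and $\Lambda_r=\delta_{r-1}\partial_r+\partial_{r+1}\delta_r$. $H_r(M)$ is the $r$-th homology of $(M_*,\partial_* )$. *)

(* Defs.v *)
From HB Require Import structures.
From mathcomp Require Import all_boot all_order all_algebra all_field.
Set Implicit Arguments. Unset Strict Implicit. Unset Printing Implicit Defensive.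
Import Order.TTheory GRing.Theory Num.Theory.
Local Open Scope ring_scope.

Definition word (n r : nat) := {t : r.-tuple 'I_n | uniq t}.

(* Vectors of M_r: coordinates in the orthonormal basis of words. *)
Definition vecM (n r : nat) := word n r -> algC.

Definition dotM (T : finType) (f g : T -> algC) : algC :=
  \sum_(x : T) f x * (g x)^*.

(* Coefficient of the word x in d_r(u): sum_j (-1)^(j-1) [u with j-th letter
   deleted = x] (0-indexed here, so sign (-1)^j). For r = 0 the sum is empty,
   i.e. d_0 = 0 (M_{-1} = 0). *)
Definition bd_coef (n r : nat) (u : word n r) (x : word n r.-1) : algC :=
  \sum_(j < r) (if take j (val (val u)) ++ drop j.+1 (val (val u))
                   == val (val x) then (-1) ^+ j else 0).

Definition bdry (n r : nat) (f : vecM n r) : vecM n r.-1 :=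
  fun x => \sum_(u : word n r) bd_coef u x * f u.

(* delta_r : M_r -> M_{r+1}, the adjoint (conjugate transpose) of d_{r+1} *)
Definition cobdry (n r : nat) (g : vecM n r) : vecM n r.+1 :=
  fun w => \sum_(x : word n r) (bd_coef w x)^* * g x.

(* Laplacian Lambda_r = delta_{r-1} d_r + d_{r+1} delta_r
   (for r = 0 the first term is absent since M_{-1} = 0). *)
Definition lap (n r : nat) : vecM n r -> vecM n r :=
  match r as r0 return vecM n r0 -> vecM n r0 with
  | 0 => fun f => bdry (cobdry f)
  | r'.+1 => fun f x => cobdry (bdry f) x + bdry (cobdry f) x
  end.

Definition posdef (T : finType) (A : (T -> algC) -> (T -> algC)) : Prop :=
  (forall f g : T -> algC, dotM (A f) g = dotM f (A g)) /\
  (forall f : T -> algC, (exists x, f x != 0) -> 0 < dotM (A f) f).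

(* Main.v *)
Require Import Defs.
From HB Require Import structures.
From mathcomp Require Import all_boot all_order all_algebra all_field.
From mathcomp Require Import ring.
Import Order.TTheory GRing.Theory Num.Theory.
Local Open Scope ring_scope.
Set Implicit Arguments. Unset Strict Implicit.

Definition del {T : Type} (j : nat) (s : seq T) := take j s ++ drop j.+1 s.

Definition bds {n : nat} (s t : seq 'I_n) : algC :=
  \sum_(0 <= j < size s) (if del j s == t then (-1) ^+ j else 0).

Lemma bdsE n (s t : seq 'I_n) :
  bds s t = \sum_(0 <= j < size s) (if del j s == t then (-1) ^+ j else 0).
Proof. by []. Qed.

Lemma bd_coefE n r (u : word n r) (x : word n r.-1) :
  bd_coef u x = bds (val (val u)) (val (val x)).
Proof. by rewrite /bd_coef /bds size_tuple big_mkord. Qed.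

Lemma bds_cons n (b : 'I_n) s t :
  bds (b :: s) t = (if s == t then 1 else 0) -
    (if t is c :: t' then (if b == c then bds s t' else 0) else 0).
Proof.
rewrite /bds /= big_nat_recl // expr0 /del /= drop0.
congr (_ + _).
case: t => [|c t'].
  rewrite oppr0; apply: big1_seq => j _; by [].
case: eqP => [<-|ne].
  rewrite -sumrN; apply: eq_bigr => j _.
  rewrite eqseq_cons eqxx /= exprS mulN1r; case: ifP => //; by rewrite oppr0.
rewrite oppr0; apply: big1_seq => j _; rewrite eqseq_cons.
by case: eqP.
Qed.

Lemma DD n (w x : seq 'I_n) :
  \sum_(0 <= j < size w) (-1) ^+ j * bds (del j w) x = 0.
Proof.
elim: w x => [|b s IH] x; first by rewrite big_geq.
rewrite /= big_nat_recl // expr0 mul1r.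
have -> : del 0 (b :: s) = s by rewrite /del /= drop0.
have E : forall j, (-1) ^+ j.+1 * bds (del j.+1 (b :: s)) x =
   - (if del j s == x then (-1) ^+ j else 0)
   + (-1) ^+ j * (if x is c :: x' then (if b == c then bds (del j s) x' else 0) else 0).
  move=> j; rewrite /del /= -/(del j s) bds_cons exprS mulN1r mulNr mulrBr opprB.
  rewrite addrC; congr (_ + _); case: ifP => _; by rewrite ?mulr1 ?mulr0 ?oppr0.
under eq_bigr do rewrite E.
rewrite big_split /= sumrN addrA -/(bds s x) addrN add0r; clear E.
case: x => [|c x']; first by rewrite big1 // => j _; rewrite mulr0.
case: eqP => _; last by rewrite big1 // => j _; rewrite mulr0.
exact: IH.
Qed.

Lemma exists_word n r (t : seq 'I_n) : uniq t -> size t = r ->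
  exists w : word n r, val (val w) = t.
Proof.
move=> Hu Hs; have Ht : size t == r by apply/eqP.
by exists (exist (fun t : r.-tuple 'I_n => uniq t) (Tuple Ht) Hu).
Qed.

Lemma sum_pick n r (t : seq 'I_n) (F : word n r -> algC) (G : algC) :
  (forall u : word n r, val (val u) = t -> F u = G) ->
  \sum_(u : word n r) (if val (val u) == t then F u else 0) =
  if uniq t && (size t == r) then G else 0.
Proof.
move=> HF; case: ifP => [/andP [Hu /eqP Hs] | Hn].
  have [w Hw] := exists_word Hu Hs.
  rewrite (bigD1 w) //= Hw eqxx HF // big1 ?addr0 // => u Hne.
  case: eqP => // Hut; case/eqP: Hne; apply: val_inj; apply: val_inj.
  by rewrite /= Hut Hw.
apply: big1 => u _; case: eqP => // Hut.
by move: Hn; rewrite -Hut (valP u) size_tuple eqxx.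
Qed.

Lemma uniq_del (T : eqType) j (s : seq T) : uniq s -> uniq (del j s).
Proof.
move=> Hu; apply: subseq_uniq Hu.
rewrite -{2}(cat_take_drop j s) /del; apply: cat_subseq => //.
by rewrite -add1n -drop_drop drop_subseq.
Qed.

Lemma size_del (T : Type) (j : nat) (s : seq T) : (j < size s)%N -> size (del j s) = (size s).-1.
Proof.
move=> Hj; rewrite /del size_cat size_take size_drop Hj.
by case: (size s) Hj => // m Hj; rewrite subSS subnKC // -ltnS.
Qed.

Lemma bdry_bdry n r (g : vecM n r.+1) (z : word n r.-1) :
  bdry (bdry g : vecM n r) z = 0.
Proof.
rewrite /bdry.
under eq_bigr do rewrite mulr_sumr.
rewrite exchange_big /=; apply: big1 => w _.
have -> : \sum_(u : word n r) bd_coef u z * (bd_coef w u * g w) =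
  (\sum_(u : word n r) bds (val (val w)) (val (val u)) * bds (val (val u)) (val (val z))) * g w.
  rewrite mulr_suml; apply: eq_bigr => u _; rewrite !bd_coefE /=; ring.
suff -> : \sum_(u : word n r) bds (val (val w)) (val (val u)) * bds (val (val u)) (val (val z)) = 0 by rewrite mul0r.
apply: (etrans _ (DD (val (val w)) (val (val z)))).
under eq_bigr => u _ do rewrite bdsE mulr_suml.
rewrite exchange_big /=; apply: eq_big_nat => j /andP [_ Hj].
transitivity (\sum_(u : word n r) (if val (val u) == del j (val (val w))
   then (-1) ^+ j * bds (val (val u)) (val (val z)) else 0)).
  by apply: eq_bigr => u _; rewrite eq_sym; case: ifP; rewrite ?mul0r.
rewrite (@sum_pick _ _ _ _ ((-1) ^+ j * bds (del j (val (val w))) (val (val z)))).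
  by rewrite uniq_del ?(valP w) //= size_del // size_tuple eqxx.
by move=> u ->.
Qed.

Definition Pb n r (b : 'I_n) (f : vecM n r) : vecM n r.+1 :=
  fun u => \sum_(x : word n r) (if val (val u) == b :: val (val x) then f x else 0).

Lemma bdry_Pb n r (b : 'I_n) (f : vecM n r) (y : word n r) :
  bdry (Pb b f) y = \sum_(x : word n r)
     (if b \in val (val x) then 0 else bds (b :: val (val x)) (val (val y)) * f x).
Proof.
rewrite /bdry /Pb.
under eq_bigr do rewrite mulr_sumr.
rewrite exchange_big /=; apply: eq_bigr => x _.
transitivity (\sum_(u : word n r.+1) (if val (val u) == b :: val (val x)
   then bds (b :: val (val x)) (val (val y)) * f x else 0)).
  apply: eq_bigr => u _; rewrite bd_coefE; case: ifP => [/eqP Hu|_]; last by rewrite mulr0.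
  by have -> : val (val u) = b :: val (val x) by exact: Hu.
rewrite (@sum_pick _ _ _ _ (bds (b :: val (val x)) (val (val y)) * f x)) //=.
by rewrite (valP x) size_tuple eqxx andbT; case: (b \in _).
Qed.

Lemma memdel (T : eqType) (s : seq T) (j : nat) (c x0 : T) :
  c \in s -> c \notin del j s -> c = nth x0 s j.
Proof.
rewrite -{1}(cat_take_drop j s) /del !mem_cat negb_or => Hc /andP [Ht Hd].
move: Hc; rewrite (negbTE Ht) /=.
case: (ltnP j (size s)) => Hj; last by rewrite drop_oversize.
by rewrite (drop_nth x0 Hj) in_cons (negbTE Hd) orbF => /eqP.
Qed.

Definition vanish n r (L : seq 'I_n) (h : vecM n r) :=
  forall y : word n r, has (fun s => s \notin val (val y)) L -> h y = 0.

Lemma sum_self n r (F : word n r -> algC) (y : word n r) :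
  \sum_(x : word n r) (if val (val x) == val (val y) then F x else 0) = F y.
Proof.
rewrite (@sum_pick _ _ _ _ (F y)); first by rewrite (valP y) size_tuple eqxx.
by move=> u Hu; congr F; apply: val_inj; apply: val_inj.
Qed.

Lemma step n r (L : seq 'I_n) (b : 'I_n) (h : vecM n r) :
  (forall z : word n r.-1, bdry h z = 0) -> vanish L h ->
  vanish (b :: L) (fun y => h y - bdry (Pb b h) y).
Proof.
move=> Hc Hv y Hs0; rewrite bdry_Pb.
have Hu : uniq (val (val y)) := valP y.
have Hsz : size (val (val y)) = r by rewrite size_tuple.
case Hb: (b \in val (val y)).
  have Hs : has (fun s => s \notin val (val y)) L.
    by move: Hs0 => /orP [] //; rewrite Hb.
  rewrite (Hv y Hs) sub0r; apply/eqP; rewrite oppr_eq0; apply/eqP.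
  move: Hu Hsz Hb Hs; case Ey: (val (val y)) => [|c Y'] // Hu Hsz Hb Hs.
  have [Ebc|Nbc] := eqVneq b c; last first.
    apply: big1 => x _; case: ifP => // HbX.
    rewrite bds_cons (negbTE Nbc) subr0.
    case: eqP => [EX|]; last by rewrite mul0r.
    by move: HbX; rewrite EX Hb.
  subst c.
  move: Hu => /= /andP [HbY' HuY'].
  have HY' : size Y' = r.-1 by rewrite -Hsz.
  have [z Hz] := exists_word HuY' HY'.
  have Hcz := Hc z; move: Hcz; rewrite /bdry.
  under eq_bigr do rewrite bd_coefE Hz.
  have E1 : forall x : word n r, bds (val (val x)) Y' * h x =
     (if b \in val (val x) then bds (val (val x)) Y' * h x else 0) +
     (if b \in val (val x) then 0 else bds (val (val x)) Y' * h x).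
    by move=> x; case: ifP; rewrite ?addr0 ?add0r.
  under eq_bigr do rewrite E1.
  rewrite big_split /=.
  rewrite (@big1 _ _ _ _ _ _ (fun x : word n r =>
     if b \in val (val x) then bds (val (val x)) Y' * h x else 0)); last first.
    move=> x _; case: ifP => // HbX.
    have [s sL sY] := hasP Hs.
    case HsX: (s \in val (val x)); last first.
      by rewrite (Hv x) ?mulr0 //; apply/hasP; exists s => //; rewrite HsX.
    rewrite bdsE big1 ?mul0r // => j _; case: ifP => // /eqP Hd.
    have E2 := memdel b HbX (_ : b \notin del j (val (val x))).
    have E3 := memdel b HsX (_ : s \notin del j (val (val x))).
    move: sY; rewrite in_cons negb_or => /andP [/eqP sb sY'].
    by case: sb; rewrite E3 ?Hd // -E2 ?Hd.
  rewrite add0r => H0.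
  transitivity (- \sum_(x : word n r) (if b \in val (val x) then 0 else bds (val (val x)) Y' * h x)); last by rewrite H0 oppr0.
  rewrite -sumrN; apply: eq_bigr => x _.
  case: ifP => HbX; first by rewrite oppr0.
  rewrite bds_cons eqxx.
  case: eqP => [EX|]; first by move: HbX; rewrite EX in_cons eqxx.
  by rewrite sub0r mulNr.
transitivity (h y - \sum_(x : word n r) (if val (val x) == val (val y) then h x else 0)).
  congr (_ - _); apply: eq_bigr => x _.
  have -> : bds (b :: val (val x)) (val (val y)) = (if val (val x) == val (val y) then 1 else 0).
    rewrite bds_cons; case Ey: (val (val y)) => [|c Y']; first by rewrite subr0.
    case: (eqVneq b c) => [Ebc|Nbc]; last by rewrite subr0.
    by move: Hb; rewrite Ey Ebc in_cons eqxx.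
  case: ifP => HbX; case: eqP => // EX.
    by move: Hb; rewrite -EX HbX.
  by rewrite mul1r.
  by rewrite mul0r.
by rewrite sum_self subrr.
Qed.

Lemma bdryD n r (F G : vecM n r) (z : word n r.-1) :
  bdry (fun y => F y + G y) z = bdry F z + bdry G z.
Proof. by rewrite /bdry -big_split; apply: eq_bigr => u _; rewrite mulrDr. Qed.

Lemma bdryB n r (F G : vecM n r) (z : word n r.-1) :
  bdry (fun y => F y - G y) z = bdry F z - bdry G z.
Proof. by rewrite /bdry -sumrB; apply: eq_bigr => u _; rewrite mulrBr. Qed.

Lemma exact_aux n r (f : vecM n r) : (forall z : word n r.-1, bdry f z = 0) ->
  forall L, exists g : vecM n r.+1, vanish L (fun y => f y - bdry g y).
Proof.
move=> Hf; elim=> [|b L [g Hg]]; first by exists (fun _ => 0).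
pose h : vecM n r := fun y => f y - bdry g y.
have Hh : forall z : word n r.-1, bdry h z = 0.
  by move=> z; rewrite /h bdryB Hf bdry_bdry subr0.
exists (fun w => g w + Pb b h w) => y Hy.
have := step Hh Hg Hy; rewrite /= bdryD opprD addrA; exact.
Qed.

Lemma exactness n r (hr : (r < n)%N) (f : vecM n r) :
  (forall z : word n r.-1, bdry f z = 0) ->
  exists g : vecM n r.+1, forall x, bdry g x = f x.
Proof.
move=> Hf; have [g Hg] := exact_aux Hf (enum 'I_n).
exists g => x; apply/eqP; rewrite eq_sym -subr_eq0; apply/eqP; apply: Hg.
apply/negPn/negP => /hasPn H.
have Hsub : {subset enum 'I_n <= val (val x)} by move=> s /H; rewrite negbK.
have := uniq_leq_size (enum_uniq _) Hsub.
by rewrite size_enum_ord size_tuple leqNgt hr.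
Qed.

Lemma dotM_conj (T : finType) (f g : T -> algC) : dotM f g = (dotM g f)^*.
Proof.
rewrite /dotM rmorph_sum; apply: eq_bigr => x _.
by rewrite rmorphM /= conjCK mulrC.
Qed.

Lemma adj1 n r (F : vecM n r.+1) (g : vecM n r) :
  dotM (bdry F) g = dotM F (cobdry g).
Proof.
rewrite /dotM /bdry /cobdry.
under eq_bigr do rewrite mulr_suml.
rewrite exchange_big; apply: eq_bigr => u _.
rewrite rmorph_sum mulr_sumr; apply: eq_bigr => x _.
rewrite rmorphM /= conjCK; ring.
Qed.

Lemma adj2 n r (F : vecM n r.+1) (g : vecM n r) :
  dotM (cobdry g) F = dotM g (bdry F).
Proof. by rewrite dotM_conj -adj1 -dotM_conj. Qed.

Lemma dotMD (T : finType) (a b g : T -> algC) :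
  dotM (fun x => a x + b x) g = dotM a g + dotM b g.
Proof. by rewrite /dotM -big_split; apply: eq_bigr => x _; rewrite mulrDl. Qed.

Lemma lapQ n r (f g : vecM n r) :
  dotM (lap f) g = dotM (bdry f) (bdry g) + dotM (cobdry f) (cobdry g).
Proof.
case: r f g => [|m] f g.
  change (dotM (bdry (cobdry f)) g = dotM (bdry f) (bdry g) + dotM (cobdry f) (cobdry g)).
  rewrite adj1 [dotM (bdry f) _]big1 ?add0r // => x _.
  rewrite [bdry f x]big1 ?mul0r // => u _.
  by rewrite /bd_coef big_ord0 mul0r.
change (dotM (fun x => cobdry (bdry f) x + bdry (cobdry f) x) g =
   dotM (bdry f) (bdry g) + dotM (cobdry f) (cobdry g)).
rewrite dotMD; congr (_ + _); [exact: adj2 | exact: adj1].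
Qed.

Lemma dotM_ge0 (T : finType) (f : T -> algC) : 0 <= dotM f f.
Proof. by apply: sumr_ge0 => x _; apply: mul_conjC_ge0. Qed.

Lemma dotM_self0 (T : finType) (f : T -> algC) : dotM f f = 0 -> forall x, f x = 0.
Proof.
move=> H x; have := psumr_eq0P (fun i _ => mul_conjC_ge0 (f i)) H (i := x) isT.
by move/eqP; rewrite mul_conjC_eq0 => /eqP.
Qed.

Unset Implicit Arguments.

Theorem theorem3p3 (n r : nat) (hr : (r < n)%N) :
  posdef (@lap n r) /\
  (* H_r(M) = 0 : every r-cycle is an (r+1)-boundary *)
  (forall f : vecM n r, (forall x, bdry f x = 0) ->
     exists g : vecM n r.+1, forall x, bdry g x = f x).
Proof.
split; last exact: exactness.
split.
  move=> f g; rewrite lapQ [RHS]dotM_conj lapQ rmorphD /= -!dotM_conj.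
  by [].
move=> f [x Hx].
rewrite lapQ lt_def addr_ge0 ?dotM_ge0 // andbT.
apply/negP; rewrite paddr_eq0 ?dotM_ge0 // => /andP [/eqP H1 /eqP H2].
have Hb := dotM_self0 H1; have Hc := dotM_self0 H2.
have [g Hg] := exactness hr Hb.
have Hff : dotM f f = 0.
  transitivity (dotM (bdry g) f).
    by rewrite /dotM; apply: eq_bigr => y _; rewrite Hg.
  rewrite adj1 /dotM big1 // => w _; by rewrite Hc conjC0 mulr0.
by move: Hx; rewrite (dotM_self0 Hff x) eqxx.
Qed.
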